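(* Let $p$ be an odd prime. Then $$2\sum_{k=(p+1)/2}^{[3p/4]}\binom{4k}{2k}\frac1{32^k}\equiv-4\sum_{k=1}^{[\frac{p+1}4]}\binom{4k-2}{2k-1}\frac1{32^k}\equiv\begin{cases}0\pmod p&\text{if }p\equiv\pm1\pmod8,\\1\pmod p&\text{if }p\equiv\pm5\pmod{16},\\-1\pmod p&\text{if }p\equiv\pm3\pmod{16}.\end{cases}$$
   Context: $[x]$ is the greatest integer $\le x$. *)

(* Defs.v *)
From HB Require Import structures.
From mathcomp Require Import all_boot all_order all_algebra.
Set Implicit Arguments. Unset Strict Implicit. Unset Printing Implicit Defensive.
Import Order.TTheory GRing.Theory Num.Theory.

(* Congruence of rationals modulo a prime p: x ≡ y (mod p) iff p divides the
   numerator of the reduced fraction x - y (equivalently x - y = p*a/b with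
   p not dividing b). *)
Definition rat_cong (p : nat) (x y : rat) : Prop :=
  (p%:Z %| numq (x - y))%Z.

(* Main.v *)
Require Import Defs.
From HB Require Import structures.
From mathcomp Require Import all_boot all_order all_algebra.
From mathcomp Require Import closed_field.
From mathcomp Require Import ring lra zify.
Set Implicit Arguments. Unset Strict Implicit. Unset Printing Implicit Defensive.
Import Order.TTheory GRing.Theory Num.Theory.
Local Open Scope ring_scope.

Section Gen.
Variable F : fieldType.
Variable p : nat.
Hypothesis pc : p \in [pchar F].

Lemma binA m : (m.+1 * 'C((m.+1).*2, m.+1) = 2 * m.*2.+1 * 'C(m.*2, m))%N.
Proof.
have h1 := mul_bin_diag (m.+1).*2 m.
have h2 := mul_bin_diag (m.*2.+1) m.
have h3 : 'C(m.*2.+1, m.+1) = 'C(m.*2.+1, m).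
  by rewrite -bin_sub; [congr binomial; lia | lia].
rewrite doubleS /= in h1.
rewrite /= in h2.
rewrite doubleS -h1 -mulnA h2 -h3; nia.
Qed.

Lemma bin_half n : (p = n.*2.+1)%N -> forall m, (m <= n)%N ->
  ('C(m.*2, m))%:R = ('C(n, m))%:R * (-4) ^+ m :> F.
Proof.
move=> hp; elim=> [|m IH] hm; first by rewrite !bin0 expr0 mulr1.
have hp0 : (p%:R : F) = 0 by apply: pcharf0.
have hm0 : (m.+1)%:R != 0 :> F.
  rewrite -(dvdn_pcharf pc); apply/negP => /dvdn_leq; lia.
apply: (mulfI hm0).
rewrite -natrM binA natrM IH ?(ltnW hm) //.
rewrite exprS mulrCA (mulrA _ ('C(n, m.+1))%:R) -natrM mul_bin_left.
have -> : (2 * m.*2.+1 = 2 * (2 * m + 1))%N by lia.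
rewrite !natrM natrB ?(ltnW hm) // natrD natrM.
have h2 : (2%:R : F) != 0.
  rewrite -(dvdn_pcharf pc); apply/negP => /dvdn_leq; lia.
have hn : (n%:R : F) = - 2%:R^-1.
  apply: (mulfI h2); rewrite mulrN mulfV //; apply/eqP; rewrite -subr_eq0 opprK.
  by rewrite -hp0 hp -[n.*2.+1]addn1 -mul2n natrD natrM.
rewrite hn; field; done.
Qed.

Lemma coefX1n N i : (('X + 1 : {poly F}) ^+ N)`_i = ('C(N, i))%:R.
Proof.
elim: N i => [|N IH] i; first by rewrite expr0 coef1; case: i.
rewrite exprSr mulrDr mulr1 coefD coefMX !IH; case: i => [|i] /=.
  by rewrite add0r !bin0.
by rewrite binS natrD addrC.
Qed.

Lemma lucas2 a b : (a < p)%N -> (b <= a)%N ->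
  ('C(p.*2 + a, p + b))%:R = 2 * ('C(a, b))%:R :> F.
Proof.
move=> hap hba.
have pc' : p \in [pchar {poly F}] by rewrite pchar_poly.
have hfr : ('X + 1 : {poly F}) ^+ p = 'X^p + 1.
  by rewrite -(pFrobenius_autE pc') pFrobenius_autD_comm ?pFrobenius_aut1 //;
     apply: mulrC.
have E : ('X + 1 : {poly F}) ^+ (p.*2 + a) =
   'X^(p + p) * ('X + 1) ^+ a + ('X^p * ('X + 1) ^+ a) *+ 2 + ('X + 1) ^+ a.
  by rewrite -addnn !exprD hfr; ring.
rewrite -!coefX1n E.
rewrite !coefD !coefXnM !coefX1n ifT; last by lia.
rewrite ifF; last by lia.
rewrite (@bin_small a (p + b)); last by lia.
by rewrite addnC addnK add0r addr0 -mulr2n mulr_natl.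
Qed.
End Gen.

Lemma pair_sum (F : fieldType) (h : nat -> F) K :
  \sum_(i < K.*2) h i = \sum_(j < K) (h j.*2 + h j.*2.+1).
Proof.
elim: K => [|K IH]; first by rewrite !big_ord0.
by rewrite doubleS !big_ord_recr /= IH addrA.
Qed.

Lemma odd_binom (F : fieldType) (x : F) n K : (n <= K.*2)%N ->
  (x + 1) ^+ n - (- x + 1) ^+ n =
  2%:R * \sum_(j < K) ('C(n, j.*2.+1))%:R * x ^+ j.*2.+1.
Proof.
move=> hnK.
rewrite !exprD1n -sumrB.
set g := fun i : nat => (x ^+ i - (- x) ^+ i) *+ 'C(n, i).
have -> : \sum_(i < n.+1) (x ^+ i *+ 'C(n, i) - (- x) ^+ i *+ 'C(n, i))
   = \sum_(i < n.+1) g i by apply: eq_bigr => i _; rewrite /g mulrnBl.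
rewrite (big_ord_widen _ g (_ : n.+1 <= (K.+1).*2)%N); last by rewrite doubleS; lia.
rewrite big_mkcond /=.
have -> : \sum_(i < (K.+1).*2) (if (i < n.+1)%N then g i else 0) = \sum_(i < (K.+1).*2) g i.
  apply: eq_bigr => i _; case: ifP => // /negbT; rewrite -leqNgt => hi.
  by rewrite /g bin_small ?mulr0n.
rewrite pair_sum big_ord_recr /=.
have g0 : forall j, g j.*2 = 0.
  by move=> j; rewrite /g -mul2n !exprM sqrrN subrr mul0rn.
rewrite g0 add0r.
have -> : g K.*2.+1 = 0 by rewrite /g bin_small ?mulr0n //; lia.
rewrite addr0.
rewrite mulr_sumr; apply: eq_bigr => j _.
rewrite g0 add0r /g exprNn -signr_odd /= odd_double /= expr1 mulN1r opprK -mulr_natl; ring.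
Qed.

Section Zeta.
Variable F : fieldType.
Variable z : F.
Hypothesis hz : z ^+ 8 + 1 = 0.
Definition sz := z^+2 - z^+6.
Definition wz := z - z^+7.
Definition vz := z^+3 - z^+5.

Ltac zid T := apply/eqP; rewrite -subr_eq0; apply/eqP;
  transitivity ((z^+8 + 1) * T); [ring | by rewrite hz mul0r].

Lemma wvz : wz * vz = sz.
Proof. rewrite /wz /vz /sz. zid ((- 1%:R * z^+2) + (1%:R * z^+4)). Qed.
Lemma wz2 : wz ^+ 2 = 2%:R + sz.
Proof. rewrite /wz /vz /sz. zid ((- 2%:R * 1) + (1%:R * z^+6)). Qed.
Lemma vz2 : vz ^+ 2 = 2%:R - sz.
Proof. rewrite /wz /vz /sz. zid ((- 2%:R * 1) + (1%:R * z^+2)). Qed.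
Lemma sz2 : sz ^+ 2 = 2%:R.
Proof. rewrite /wz /vz /sz. zid ((- 2%:R * 1) + (1%:R * z^+4)). Qed.

Lemma case1 : (z^+1 - (z^+1)^+7 = wz) /\ ((z^+1)^+3 - (z^+1)^+5 = vz) /\ ((z^+1)^+2 - (z^+1)^+6 = sz).
Proof. rewrite /wz /vz /sz; split; [|split]. - ring. - ring. - ring. Qed.

Lemma case3 : (z^+3 - (z^+3)^+7 = vz) /\ ((z^+3)^+3 - (z^+3)^+5 = - wz) /\ ((z^+3)^+2 - (z^+3)^+6 = - sz).
Proof. rewrite /wz /vz /sz; split; [|split]. - by zid ((1%:R * z^+5) + (- 1%:R * z^+13)). - by zid ((1%:R * z^+1) + (- 1%:R * z^+7)). - by zid ((1%:R * z^+2) + (- 1%:R * z^+10)). Qed.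

Lemma case5 : (z^+5 - (z^+5)^+7 = - vz) /\ ((z^+5)^+3 - (z^+5)^+5 = wz) /\ ((z^+5)^+2 - (z^+5)^+6 = - sz).
Proof. rewrite /wz /vz /sz; split; [|split]. - by zid ((1%:R * z^+3) + (- 1%:R * z^+11) + (1%:R * z^+19) + (- 1%:R * z^+27)). - by zid ((- 1%:R * z^+1) + (1%:R * z^+7) + (1%:R * z^+9) + (- 1%:R * z^+17)). - by zid ((1%:R * z^+2) + (- 1%:R * z^+6) + (1%:R * z^+14) + (- 1%:R * z^+22)). Qed.

Lemma case7 : (z^+7 - (z^+7)^+7 = - wz) /\ ((z^+7)^+3 - (z^+7)^+5 = - vz) /\ ((z^+7)^+2 - (z^+7)^+6 = sz).
Proof. rewrite /wz /vz /sz; split; [|split]. - by zid ((1%:R * z^+1) + (- 1%:R * z^+9) + (1%:R * z^+17) + (- 1%:R * z^+25) + (1%:R * z^+33) + (- 1%:R * z^+41)). - by zid ((1%:R * z^+3) + (- 1%:R * z^+5) + (- 1%:R * z^+11) + (1%:R * z^+13) + (1%:R * z^+19) + (- 1%:R * z^+27)). - by zid ((- 1%:R * z^+2) + (1%:R * z^+6) + (1%:R * z^+10) + (- 1%:R * z^+18) + (1%:R * z^+26) + (- 1%:R * z^+34)). Qed.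

Lemma case9 : (z^+9 - (z^+9)^+7 = - wz) /\ ((z^+9)^+3 - (z^+9)^+5 = - vz) /\ ((z^+9)^+2 - (z^+9)^+6 = sz).
Proof. rewrite /wz /vz /sz; split; [|split]. - by zid ((1%:R * z^+1) + (- 1%:R * z^+7) + (1%:R * z^+15) + (- 1%:R * z^+23) + (1%:R * z^+31) + (- 1%:R * z^+39) + (1%:R * z^+47) + (- 1%:R * z^+55)). - by zid ((1%:R * z^+3) + (- 1%:R * z^+5) + (- 1%:R * z^+11) + (1%:R * z^+13) + (1%:R * z^+19) + (- 1%:R * z^+21) + (1%:R * z^+29) + (- 1%:R * z^+37)). - by zid ((- 1%:R * z^+2) + (1%:R * z^+6) + (1%:R * z^+10) + (- 1%:R * z^+14) + (1%:R * z^+22) + (- 1%:R * z^+30) + (1%:R * z^+38) + (- 1%:R * z^+46)). Qed.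

Lemma case11 : (z^+11 - (z^+11)^+7 = - vz) /\ ((z^+11)^+3 - (z^+11)^+5 = wz) /\ ((z^+11)^+2 - (z^+11)^+6 = - sz).
Proof. rewrite /wz /vz /sz; split; [|split]. - by zid ((1%:R * z^+3) + (- 1%:R * z^+5) + (1%:R * z^+13) + (- 1%:R * z^+21) + (1%:R * z^+29) + (- 1%:R * z^+37) + (1%:R * z^+45) + (- 1%:R * z^+53) + (1%:R * z^+61) + (- 1%:R * z^+69)). - by zid ((- 1%:R * z^+1) + (1%:R * z^+7) + (1%:R * z^+9) + (- 1%:R * z^+15) + (- 1%:R * z^+17) + (1%:R * z^+23) + (1%:R * z^+25) + (- 1%:R * z^+31) + (1%:R * z^+39) + (- 1%:R * z^+47)). - by zid ((1%:R * z^+2) + (- 1%:R * z^+6) + (- 1%:R * z^+10) + (1%:R * z^+14) + (1%:R * z^+18) + (- 1%:R * z^+26) + (1%:R * z^+34) + (- 1%:R * z^+42) + (1%:R * z^+50) + (- 1%:R * z^+58)). Qed.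

Lemma case13 : (z^+13 - (z^+13)^+7 = vz) /\ ((z^+13)^+3 - (z^+13)^+5 = - wz) /\ ((z^+13)^+2 - (z^+13)^+6 = - sz).
Proof. rewrite /wz /vz /sz; split; [|split]. - by zid ((- 1%:R * z^+3) + (1%:R * z^+5) + (1%:R * z^+11) + (- 1%:R * z^+19) + (1%:R * z^+27) + (- 1%:R * z^+35) + (1%:R * z^+43) + (- 1%:R * z^+51) + (1%:R * z^+59) + (- 1%:R * z^+67) + (1%:R * z^+75) + (- 1%:R * z^+83)). - by zid ((1%:R * z^+1) + (- 1%:R * z^+7) + (- 1%:R * z^+9) + (1%:R * z^+15) + (1%:R * z^+17) + (- 1%:R * z^+23) + (- 1%:R * z^+25) + (1%:R * z^+31) + (1%:R * z^+33) + (- 1%:R * z^+41) + (1%:R * z^+49) + (- 1%:R * z^+57)). - by zid ((1%:R * z^+2) + (- 1%:R * z^+6) + (- 1%:R * z^+10) + (1%:R * z^+14) + (1%:R * z^+18) + (- 1%:R * z^+22) + (1%:R * z^+30) + (- 1%:R * z^+38) + (1%:R * z^+46) + (- 1%:R * z^+54) + (1%:R * z^+62) + (- 1%:R * z^+70)). Qed.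

Lemma case15 : (z^+15 - (z^+15)^+7 = wz) /\ ((z^+15)^+3 - (z^+15)^+5 = vz) /\ ((z^+15)^+2 - (z^+15)^+6 = sz).
Proof. rewrite /wz /vz /sz; split; [|split]. - by zid ((- 1%:R * z^+1) + (1%:R * z^+7) + (1%:R * z^+9) + (- 1%:R * z^+17) + (1%:R * z^+25) + (- 1%:R * z^+33) + (1%:R * z^+41) + (- 1%:R * z^+49) + (1%:R * z^+57) + (- 1%:R * z^+65) + (1%:R * z^+73) + (- 1%:R * z^+81) + (1%:R * z^+89) + (- 1%:R * z^+97)). - by zid ((- 1%:R * z^+3) + (1%:R * z^+5) + (1%:R * z^+11) + (- 1%:R * z^+13) + (- 1%:R * z^+19) + (1%:R * z^+21) + (1%:R * z^+27) + (- 1%:R * z^+29) + (- 1%:R * z^+35) + (1%:R * z^+37) + (1%:R * z^+43) + (- 1%:R * z^+51) + (1%:R * z^+59) + (- 1%:R * z^+67)). - by zid ((- 1%:R * z^+2) + (1%:R * z^+6) + (1%:R * z^+10) + (- 1%:R * z^+14) + (- 1%:R * z^+18) + (1%:R * z^+22) + (1%:R * z^+26) + (- 1%:R * z^+34) + (1%:R * z^+42) + (- 1%:R * z^+50) + (1%:R * z^+58) + (- 1%:R * z^+66) + (1%:R * z^+74) + (- 1%:R * z^+82)). Qed.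
End Zeta.

Definition S1F (F : fieldType) (p : nat) : F :=
  (2 * \sum_((p.+1)./2 <= k < ((3 * p) %/ 4).+1) ('C(4 * k, 2 * k))%:R / 32%:R ^+ k).
Definition S2F (F : fieldType) (p : nat) : F :=
  (- 4%:R * \sum_(1 <= k < ((p.+1) %/ 4).+1) ('C(4 * k - 2, 2 * k - 1))%:R / 32%:R ^+ k).
Definition UF (F : fieldType) (p : nat) : F :=
  \sum_(j < (p.+1) %/ 4) ('C((j.*2.+1).*2, j.*2.+1))%:R / 32%:R ^+ j.+1.

Lemma S2U (F : fieldType) p : S2F F p = - 4%:R * UF F p.
Proof.
rewrite /S2F /UF big_add1 /= big_mkord; congr (_ * _); apply: eq_bigr => j _.
have -> : (4 * j.+1 - 2 = (j.*2.+1).*2)%N by lia.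
by have -> : (2 * j.+1 - 1 = j.*2.+1)%N by lia.
Qed.

Section Main.
Variable F : fieldType.
Variable p : nat.
Hypothesis pc : p \in [pchar F].
Hypothesis hodd : odd p.

Lemma hpn : p = (p./2).*2.+1.
Proof. have := odd_double_half p; rewrite hodd /=; lia. Qed.

Lemma nz2 : (2%:R : F) != 0.
Proof.
rewrite -(dvdn_pcharf pc); apply/negP => /dvdn_leq h.
have hp := pcharf_prime pc; have := prime_gt1 hp.
have : p <> 2%N by move=> e; move: hodd; rewrite e.
lia.
Qed.

Lemma nz32 : (32%:R : F) != 0.
Proof. by rewrite (_ : 32 = 2 ^ 5)%N // natrX expf_neq0 // nz2. Qed.

Lemma nz4 : (4%:R : F) != 0.
Proof. by rewrite (_ : 4 = 2 * 2)%N // natrM mulf_neq0 // nz2. Qed.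

Lemma S1U : S1F F p * 32%:R ^+ (p./2) = 4%:R * UF F p.
Proof.
have hp := hpn; set n := p./2 in hp *.
rewrite /S1F /UF.
have -> : ((p.+1)./2 = 0 + n.+1)%N by rewrite {1}hp; lia.
rewrite big_addn.
have -> : (((3 * p) %/ 4).+1 - n.+1 = (p.+1) %/ 4)%N by rewrite hp; lia.
rewrite big_mkord -mulrA mulr_suml mulr_sumr mulr_sumr; apply: eq_bigr => j _.
have hj := ltn_ord j.
have -> : (4 * (j + n.+1) = p.*2 + (j.*2.+1).*2)%N by lia.
have -> : (2 * (j + n.+1) = p + j.*2.+1)%N by lia.
rewrite lucas2 //; [|lia|lia].
rewrite (_ : j + n.+1 = j.+1 + n)%N ?exprD; last by lia.
have := nz32; move=> h32.
field; by rewrite !expf_neq0.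
Qed.

Lemma UF_bin : - 4%:R * UF F p =
  \sum_(j < (p.+1) %/ 4) ('C(p./2, j.*2.+1))%:R * (2%:R^-1) ^+ j.+1.
Proof.
have hp := hpn; set n := p./2 in hp *.
rewrite /UF mulr_sumr; apply: eq_bigr => j _.
have hj := ltn_ord j.
rewrite (bin_half pc hp); last by lia.
have e1 : (-4 : F) ^+ (j.*2.+1) = - 4%:R * 16%:R ^+ j.
  by rewrite exprS -mul2n exprM sqrrN expr2 -natrM.
have e2 : (32%:R : F) ^+ j.+1 = 2%:R ^+ j.+1 * (16%:R * 16%:R ^+ j).
  by rewrite -exprS -exprMn -natrM.
rewrite e1 e2 exprVn.
have h2 := nz2; have h16 : (16%:R : F) != 0.
  by rewrite (_ : 16 = 2 ^ 4)%N // natrX expf_neq0.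
field; by rewrite h16 !expf_neq0.
Qed.

Lemma main_eq (z : F) (hz : z ^+ 8 + 1 = 0) :
  4%:R * 2%:R ^+ (p./2) * S2F F p = vz z * wz z ^+ p - wz z * vz z ^+ p.
Proof.
have hp := hpn; set n := p./2 in hp *.
set K := ((p.+1) %/ 4)%N.
have hK : (n <= K.*2)%N by rewrite /K; lia.
set s := sz z.
set y := s / 2%:R.
have h2 := nz2.
have hy2 : y ^+ 2 = 2%:R^-1.
  by rewrite /y expr_div_n sz2 //; field; rewrite h2 nz4.
have hsum : \sum_(j < K) ('C(n, j.*2.+1))%:R * (2%:R^-1) ^+ j.+1
   = y * \sum_(j < K) ('C(n, j.*2.+1))%:R * y ^+ j.*2.+1.
  rewrite mulr_sumr; apply: eq_bigr => j _.
  by rewrite -hy2 -exprM mulrCA -exprS mul2n.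
rewrite S2U UF_bin hsum.
have := @odd_binom F y n K hK.
set T := \sum_(j < K) _ => hT.
have -> : T = ((y + 1) ^+ n - (- y + 1) ^+ n) / 2%:R by rewrite hT; field.
have -> : y + 1 = (2%:R + s) * 2%:R^-1 by rewrite /y; field.
have -> : - y + 1 = (2%:R - s) * 2%:R^-1 by rewrite /y; field.
rewrite hp !exprS -mul2n !exprM wz2 // vz2 //.
rewrite !exprMn !exprVn -/s.
have -> : vz z * (wz z * (2%:R + s) ^+ n) = s * (2%:R + s) ^+ n.
  by rewrite mulrA (mulrC (vz z)) wvz.
have -> : wz z * (vz z * (2%:R - s) ^+ n) = s * (2%:R - s) ^+ n.
  by rewrite mulrA wvz.
rewrite /y; field; by rewrite h2 expf_neq0.
Qed.

Section Z.
Variable z : F.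
Hypothesis hz : z ^+ 8 + 1 = 0.

Lemma fB (x y : F) : (x - y) ^+ p = x ^+ p - y ^+ p.
Proof. by rewrite -!(pFrobenius_autE pc) pFrobenius_autB_comm //; exact: mulrC. Qed.

Lemma zmod : z ^+ p = z ^+ (p %% 16).
Proof.
rewrite expr_mod //.
have h8 : z ^+ 8 = -1 by apply/eqP; rewrite -addr_eq0; apply/eqP.
by rewrite (_ : 16 = 8 * 2)%N // exprM h8 sqrrN expr1n.
Qed.

Lemma frobW : wz z ^+ p = z ^+ (p %% 16) - (z ^+ (p %% 16)) ^+ 7.
Proof. by rewrite /wz fB exprAC zmod. Qed.
Lemma frobV : vz z ^+ p = (z ^+ (p %% 16)) ^+ 3 - (z ^+ (p %% 16)) ^+ 5.
Proof. by rewrite /vz fB exprAC [(z ^+ 5) ^+ p]exprAC zmod. Qed.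
Lemma frobS : sz z ^+ p = (z ^+ (p %% 16)) ^+ 2 - (z ^+ (p %% 16)) ^+ 6.
Proof. by rewrite /sz fB exprAC [(z ^+ 6) ^+ p]exprAC zmod. Qed.

Lemma sigmaS : sz z ^+ p = 2%:R ^+ (p./2) * sz z.
Proof. by rewrite {1}hpn exprS -mul2n exprM sz2 // mulrC. Qed.

Lemma sig_of e : sz z ^+ p = e * sz z -> 2%:R ^+ (p./2) = e.
Proof.
rewrite sigmaS => h; apply: (mulIf _ h).
apply/eqP => h0; have := sz2 hz; rewrite h0 expr0n /= => /eqP.
by rewrite eq_sym (negbTE nz2).
Qed.

Lemma solve_case e A B : 2%:R ^+ (p./2) = e -> e != 0 ->
  wz z ^+ p = A -> vz z ^+ p = B ->
  S2F F p = (vz z * A - wz z * B) / (4%:R * e).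
Proof.
move=> he hne hA hB; have := main_eq hz; rewrite he hA hB => <-.
by field; rewrite hne nz4.
Qed.

Lemma hsq : vz z * vz z + wz z * wz z = 4%:R.
Proof. by rewrite -!expr2 wz2 // vz2 //; ring. Qed.

Lemma S2_vals :
 ((p %% 16 = 1 \/ p %% 16 = 7 \/ p %% 16 = 9 \/ p %% 16 = 15)%N ->
     S2F F p = 0 /\ (2%:R : F) ^+ (p./2) = 1) /\
 ((p %% 16 = 3 \/ p %% 16 = 13)%N -> S2F F p = -1 /\ (2%:R : F) ^+ (p./2) = -1) /\
 ((p %% 16 = 5 \/ p %% 16 = 11)%N -> S2F F p = 1 /\ (2%:R : F) ^+ (p./2) = -1).
Proof.
have hw := frobW; have hv := frobV; have hs := frobS.
have n1 : (-1 : F) != 0 by rewrite oppr_eq0 oner_neq0.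
have n1' : (1 : F) != 0 by rewrite oner_neq0.
split; [|split].
- case=> [hr|[hr|[hr|hr]]]; rewrite hr in hw hv hs.
  + have [cw [cv cs]] := @case1 F z; rewrite cw in hw; rewrite cv in hv; rewrite cs -{2}[sz z]mul1r in hs.
    have he := sig_of hs; split=> //; rewrite (solve_case he n1' hw hv); field; rewrite ?oppr_eq0; exact: nz4.
  + have [cw [cv cs]] := @case7 F z hz; rewrite cw in hw; rewrite cv in hv; rewrite cs -{2}[sz z]mul1r in hs.
    have he := sig_of hs; split=> //; rewrite (solve_case he n1' hw hv); field; rewrite ?oppr_eq0; exact: nz4.
  + have [cw [cv cs]] := @case9 F z hz; rewrite cw in hw; rewrite cv in hv; rewrite cs -{2}[sz z]mul1r in hs.
    have he := sig_of hs; split=> //; rewrite (solve_case he n1' hw hv); field; rewrite ?oppr_eq0; exact: nz4.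
  + have [cw [cv cs]] := @case15 F z hz; rewrite cw in hw; rewrite cv in hv; rewrite cs -{2}[sz z]mul1r in hs.
    have he := sig_of hs; split=> //; rewrite (solve_case he n1' hw hv); field; rewrite ?oppr_eq0; exact: nz4.
- case=> hr; rewrite hr in hw hv hs.
  + have [cw [cv cs]] := @case3 F z hz; rewrite cw in hw; rewrite cv in hv; rewrite cs -mulN1r in hs.
    have he := sig_of hs; split=> //; rewrite (solve_case he n1 hw hv).
    rewrite mulrN opprK hsq; field; rewrite ?oppr_eq0; exact: nz4.
  + have [cw [cv cs]] := @case13 F z hz; rewrite cw in hw; rewrite cv in hv; rewrite cs -mulN1r in hs.
    have he := sig_of hs; split=> //; rewrite (solve_case he n1 hw hv).
    rewrite mulrN opprK hsq; field; rewrite ?oppr_eq0; exact: nz4.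
- case=> hr; rewrite hr in hw hv hs.
  + have [cw [cv cs]] := @case5 F z hz; rewrite cw in hw; rewrite cv in hv; rewrite cs -mulN1r in hs.
    have he := sig_of hs; split=> //; rewrite (solve_case he n1 hw hv).
    rewrite mulrN -opprD hsq; field; rewrite ?oppr_eq0; exact: nz4.
  + have [cw [cv cs]] := @case11 F z hz; rewrite cw in hw; rewrite cv in hv; rewrite cs -mulN1r in hs.
    have he := sig_of hs; split=> //; rewrite (solve_case he n1 hw hv).
    rewrite mulrN -opprD hsq; field; rewrite ?oppr_eq0; exact: nz4.
Qed.

Lemma S1_S2 : S1F F p = S2F F p.
Proof.
have [h1 [h2 h3]] := S2_vals.
have hS := S1U; rewrite S2U in hS *.
have e32 : (32%:R : F) ^+ (p./2) = (2%:R ^+ (p./2)) ^+ 5.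
  by rewrite -exprM mulnC exprM -(natrX _ 2 5).
rewrite e32 in hS.
have hm : (p %% 2 = 1)%N by rewrite modn2 hodd.
have : (p %% 16 = 1 \/ p %% 16 = 7 \/ p %% 16 = 9 \/ p %% 16 = 15)%N \/
       (p %% 16 = 3 \/ p %% 16 = 13)%N \/ (p %% 16 = 5 \/ p %% 16 = 11)%N by lia.
have m5 : (-1 : F) ^+ 5 = -1 by rewrite -signr_odd /= expr1.
case=> [/h1|[/h2|/h3]] [hs he]; rewrite he in hS; rewrite S2U in hs.
- move: hS; rewrite expr1n mulr1 => ->.
  by rewrite hs -[4%:R * _]opprK -mulNr hs oppr0.
- have e : S1F F p = - (S1F F p * (-1) ^+ 5) by rewrite m5 mulrN1 opprK.
  by rewrite e hS mulNr.
- have e : S1F F p = - (S1F F p * (-1) ^+ 5) by rewrite m5 mulrN1 opprK.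
  by rewrite e hS mulNr.
Qed.
End Z.
End Main.

Lemma G1 (F : fieldType) (f : nat -> nat) a b : (32%:R : F) != 0 ->
  (\sum_(a <= k < b.+1) (f k)%:R / 32%:R ^+ k) * 32%:R ^+ b =
  ((\sum_(a <= k < b.+1) f k * 32 ^ (b - k))%N)%:R :> F.
Proof.
move=> h; rewrite mulr_suml natr_sum; apply: eq_big_nat => k /andP[_ hk].
rewrite natrM natrX -{1}(subnK (_ : k <= b)%N); last by lia.
by rewrite exprD; field; rewrite expf_neq0.
Qed.


Lemma rcong p (X Y : rat) (b : nat) (a : int) :
  (X - Y) * b%:R = a%:~R -> coprime p b -> (p%:Z %| a)%Z -> rat_cong p X Y.
Proof.
rewrite /rat_cong; set q := X - Y => hq hcop hpa.
have e : (numq q * b%:Z = a * denq q)%R.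
  apply/eqP; rewrite -(eqr_int rat) !intrM numqE -hq pmulrn; apply/eqP; ring.
rewrite -(@Gauss_dvdzl _ _ b%:Z) ?coprimezE // e.
exact: dvdz_mulr.
Qed.


Lemma intdvd (F : fieldType) p (pc : p \in [pchar F]) (a : int) :
  (a%:~R : F) = 0 -> (p%:Z %| a)%Z.
Proof.
case: a => n h; rewrite dvdzE /= (dvdn_pcharf pc); apply/eqP.
  by rewrite -pmulrn in h.
by move: h; rewrite NegzE mulrNz -pmulrn => /eqP; rewrite oppr_eq0 => /eqP.
Qed.

Section Fin.
Variable p : nat.
Definition K1 := ((3 * p) %/ 4)%N.
Definition K2 := ((p.+1) %/ 4)%N.
Definition N1 := (\sum_((p.+1)./2 <= k < K1.+1) 'C(4 * k, 2 * k) * 32 ^ (K1 - k))%N.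
Definition N2 := (\sum_(1 <= k < K2.+1) 'C(4 * k - 2, 2 * k - 1) * 32 ^ (K2 - k))%N.
Definition a1 : int := (2 * N1 * 32 ^ K2)%N%:Z + (4 * N2 * 32 ^ K1)%N%:Z.
Definition a2 (c : int) : int := - (4 * N2)%N%:Z - c * (32 ^ K2)%N%:Z.

Lemma eS1 (F : fieldType) : (32%:R : F) != 0 -> S1F F p * 32%:R ^+ K1 = 2%:R * N1%:R.
Proof. by move=> h; rewrite /S1F -mulrA (G1 (fun k => 'C(4 * k, 2 * k))). Qed.
Lemma eS2 (F : fieldType) : (32%:R : F) != 0 -> S2F F p * 32%:R ^+ K2 = - 4%:R * N2%:R.
Proof. by move=> h; rewrite /S2F -mulrA (G1 (fun k => 'C(4 * k - 2, 2 * k - 1))). Qed.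

Lemma D1 (F : fieldType) : (32%:R : F) != 0 ->
  (S1F F p - S2F F p) * 32%:R ^+ (K1 + K2) = a1%:~R.
Proof.
move=> h; have h1 := eS1 h; have h2 := eS2 h.
have e : forall x y u v : F, (x - y) * (u * v) = x * u * v - y * v * u by move=> *; ring.
rewrite exprD e h1 h2.
rewrite /a1 rmorphD /= -!pmulrn !natrM !natrX; ring.
Qed.

Lemma D2 (F : fieldType) (c : int) : (32%:R : F) != 0 ->
  (S2F F p - c%:~R) * 32%:R ^+ K2 = (a2 c)%:~R.
Proof.
move=> h; rewrite mulrBl eS2 //.
rewrite /a2 rmorphB rmorphN rmorphM /= -!pmulrn !natrM !natrX; ring.
Qed.
End Fin.

Theorem corollary3p4 (p : nat) (hp : prime p) (hodd : odd p) :
  let S1 : rat := (2 * \sum_((p.+1)./2 <= k < ((3 * p) %/ 4).+1)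
                        ('C(4 * k, 2 * k))%:R / 32%:R ^+ k)%R in
  let S2 : rat := (- 4%:R * \sum_(1 <= k < ((p.+1) %/ 4).+1)
                        ('C(4 * k - 2, 2 * k - 1))%:R / 32%:R ^+ k)%R in
  rat_cong p S1 S2 /\
  ((p %% 8 = 1 \/ p %% 8 = 7)%N -> rat_cong p S2 0%R) /\
  ((p %% 16 = 5 \/ p %% 16 = 11)%N -> rat_cong p S2 1%R) /\
  ((p %% 16 = 3 \/ p %% 16 = 13)%N -> rat_cong p S2 (-1)%R).
Proof.
move=> S1 S2.
change S1 with (S1F rat p); change S2 with (S2F rat p).
have [L [FtoL _]] := countable_algebraic_closure 'F_p.
have pc : p \in [pchar L].
  apply/andP; split=> //.
  by rewrite -(rmorph_nat FtoL) (pchar_Fp_0 hp) rmorph0.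
have [z hz] : exists z : L, z ^+ 8 + 1 = 0.
  have /closed_rootP [z hz] : size ('X^8 + 1%:P : {poly L}) != 1%N by rewrite size_XnaddC.
  by exists z; move: hz => /rootP; rewrite hornerD hornerXn hornerC.
have h32L : (32%:R : L) != 0 by apply: (nz32 pc hodd).
have h32Q : (32%:R : rat) != 0 by [].
have hcop : forall e, coprime p (32 ^ e).
  by move=> e; apply: coprimeXr; rewrite (_ : 32 = 2 ^ 5)%N //; apply: coprimeXr; rewrite coprimen2.
have [v1 [v2 v3]] := S2_vals pc hodd hz.
have cong2 : forall c : int, S2F L p = c%:~R -> rat_cong p (S2F rat p) c%:~R.
  move=> c hc; apply: (@rcong _ _ _ (32 ^ K2 p) (a2 p c)).
  - by rewrite natrX D2.
  - exact: hcop.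
  - by apply: (intdvd pc); rewrite -(D2 p c h32L) hc subrr mul0r.
split; [|split; [|split]].
- apply: (@rcong _ _ _ (32 ^ (K1 p + K2 p)) (a1 p)).
  + by rewrite natrX D1.
  + exact: hcop.
  + by apply: (intdvd pc); rewrite -(D1 p h32L) (S1_S2 pc hodd hz) subrr mul0r.
- move=> h8.
  have h16 : (p %% 16 = 1 \/ p %% 16 = 7 \/ p %% 16 = 9 \/ p %% 16 = 15)%N by lia.
  have [e _] := v1 h16.
  by apply: (cong2 0); rewrite e.
- move=> h; have [e _] := v3 h.
  by apply: (cong2 1); rewrite e.
- move=> h; have [e _] := v2 h.
  by apply: (cong2 (-1)); rewrite e.
Qed.
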